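(* With the notation of the context, the solution $x:[0,1]\to\mathbb{R}^{n_x}$ of the linear ODE $$\frac{dx}{d\lambda}=A(\lambda)x(\lambda)+b(\lambda),\qquad x(0)=x_0,$$ satisfies $x(1)=\Phi(1,0)x_0+E\,c$, where $\Phi(1,0)=I+E\,\Omega F^\top$ with $\Omega=\mathrm{diag}(\omega_i)$, $\omega_i=\big((1+\alpha_i)^{-1/2}-1\big)/\alpha_i$, and $c\in\mathbb{R}^{n_z}$ has entries $$c_i=\frac{\alpha_i\tilde z_i+\tilde x_i\big(1-\sqrt{1+\alpha_i}\big)}{\alpha_i(1+\alpha_i)}.$$ Moreover $b(\mu)=E\beta(\mu)$ with $\beta_i(\mu)=\dfrac{\tilde z_i(1+\tfrac12\mu\alpha_i)-\tfrac12\tilde x_i}{(1+\mu\alpha_i)^2}$.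
   Context: $P\in\mathbb{R}^{n_x\times n_x}$, $R\in\mathbb{R}^{n_z\times n_z}$ symmetric positive definite, $H\in\mathbb{R}^{n_z\times n_x}$ of full row rank, $\bar x\in\mathbb{R}^{n_x}$ (prior mean), $z\in\mathbb{R}^{n_z}$ (observation). $R^{-1/2}$ is the inverse of the symmetric positive definite square root of $R$. The EDH flow is defined by $A(\lambda)=-\tfrac12 PH^\top(\lambda HPH^\top+R)^{-1}H$ and $b(\lambda)=(I+2\lambda A(\lambda))\big[(I+\lambda A(\lambda))PH^\top R^{-1}z+A(\lambda)\bar x\big]$. Let $D=R^{-1/2}HPH^\top R^{-1/2}=V\Lambda V^\top$ with $V$ orthogonal and $\Lambda=\mathrm{diag}(\alpha_1,\dots,\alpha_{n_z})$, $\alpha_i>0$. Define $E=PH^\top R^{-1/2}V$, $F^\top=V^\top R^{-1/2}H$, $\tilde z=V^\top R^{-1/2}z$, $\tilde x=F^\top\bar x$. *)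

(* Defs.v *)
From HB Require Import structures.
From mathcomp Require Import all_boot all_order all_algebra.
From mathcomp Require Import all_classical all_reals all_analysis.
Set Implicit Arguments. Unset Strict Implicit. Unset Printing Implicit Defensive.
Import Order.TTheory GRing.Theory Num.Theory.
Local Open Scope ring_scope.

Section EDH.
Variable R : realType.

Definition spd n (M : 'M[R]_n) : Prop :=
  M^T = M /\ forall v : 'cV[R]_n, v != 0 -> 0 < (v^T *m M *m v) 0 0.

Definition edhA nx nz (P : 'M[R]_nx) (H : 'M[R]_(nz, nx)) (Rm : 'M[R]_nz) (l : R)
  : 'M[R]_nx :=
  (- (1/2)) *: (P *m H^T *m invmx (l *: (H *m P *m H^T) + Rm) *m H).

Definition edhb nx nz (P : 'M[R]_nx) (H : 'M[R]_(nz, nx)) (Rm : 'M[R]_nz)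
  (xbar : 'cV[R]_nx) (z : 'cV[R]_nz) (l : R) : 'cV[R]_nx :=
  let A := edhA P H Rm l in
  (1%:M + (2 * l) *: A) *m
    ((1%:M + l *: A) *m P *m H^T *m invmx Rm *m z + A *m xbar).

End EDH.

(* Main.v *)
Require Import Defs.
From HB Require Import structures.
From mathcomp Require Import all_boot all_order all_algebra.
From mathcomp Require Import all_classical all_reals all_analysis.
From mathcomp Require Import ring lra.
Import Order.TTheory GRing.Theory Num.Theory numFieldNormedType.Exports.
Local Open Scope ring_scope.
Local Open Scope classical_set_scope.

Section Alg.
Variable R : realType.
Set Implicit Arguments. Unset Strict Implicit.

Lemma inv_uniq n (A B : 'M[R]_n) : A *m B = 1%:M -> invmx A = B.
Proof.
move=> h; have [uA _] := mulmx1_unit h.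
by rewrite -[invmx A]mulmx1 -h mulmxA mulVmx ?mul1mx.
Qed.

Lemma spd_unit n (M : 'M[R]_n) : spd M -> M \in unitmx.
Proof.
move=> [_ pos]; rewrite -row_free_unit -kermx_eq0.
apply/negPn/negP => /matrix0Pn [i [j hij]].
set u := row i (kermx M).
have uK : u *m M = 0 by apply/sub_kermxP; exact: row_sub.
have un : u^T != 0.
  by apply/matrix0Pn; exists j, ord0; rewrite 2!mxE.
have := pos _ un; rewrite trmxK uK mul0mx mxE ltxx //.
Qed.

Definition dm n (f : 'I_n -> R) : 'M[R]_n := diag_mx (\row_i f i).
Arguments dm {n}.

Lemma dmM n (f g : 'I_n -> R) : dm f *m dm g = dm (fun i => f i * g i).
Proof.
rewrite /dm mul_diag_mx; apply/matrixP => i j; rewrite !mxE.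
by case: (i == j) => //=; rewrite ?mulr1n ?mulr0n ?mulr0.
Qed.

Lemma dmZ n a (f : 'I_n -> R) : a *: dm f = dm (fun i => a * f i).
Proof.
rewrite /dm; apply/matrixP => i j; rewrite !mxE.
by case: (i == j) => //=; rewrite ?mulr1n ?mulr0n ?mulr0.
Qed.

Lemma dmD1 n (f : 'I_n -> R) : 1%:M + dm f = dm (fun i => 1 + f i).
Proof.
rewrite /dm; apply/matrixP => i j; rewrite !mxE.
by rewrite mulrnDl.
Qed.

Lemma dm1 n (f : 'I_n -> R) : (forall i, f i = 1) -> dm f = 1%:M.
Proof.
move=> h; rewrite /dm; apply/matrixP => i j; rewrite !mxE h eq_sym.
by case: (i == j); rewrite ?mulr1n ?mulr0n.
Qed.

Lemma dmv n (f : 'I_n -> R) (v : 'cV[R]_n) i : (dm f *m v) i 0 = f i * v i 0.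
Proof. by rewrite /dm mul_diag_mx !mxE. Qed.

Lemma dm_row n (a : 'rV[R]_n) : diag_mx a = dm (fun i => a 0 i).
Proof. by rewrite /dm; congr diag_mx; apply/rowP => i; rewrite mxE. Qed.


Lemma HPH_form nx nz (P : 'M[R]_nx) (H : 'M[R]_(nz, nx)) (Rh V : 'M[R]_nz) (alpha : 'rV[R]_nz) :
  Rh \in unitmx ->
  invmx Rh *m H *m P *m H^T *m invmx Rh = V *m diag_mx alpha *m V^T ->
  H *m P *m H^T = Rh *m V *m diag_mx alpha *m V^T *m Rh.
Proof.
move=> uRh hd.
have <- : Rh *m (invmx Rh *m H *m P *m H^T *m invmx Rh) *m Rh = H *m P *m H^T.
  by rewrite !mulmxA mulmxV // mul1mx mulmxKV.
by rewrite hd !mulmxA.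
Qed.

Lemma edhA_form nx nz (P : 'M[R]_nx) (H : 'M[R]_(nz, nx)) (Rm Rh V : 'M[R]_nz)
  (alpha : 'rV[R]_nz) (l : R) :
  Rh \in unitmx -> Rh *m Rh = Rm -> V *m V^T = 1%:M -> V^T *m V = 1%:M ->
  (forall i, 0 < alpha 0 i) -> 0 <= l ->
  invmx Rh *m H *m P *m H^T *m invmx Rh = V *m diag_mx alpha *m V^T ->
  edhA P H Rm l = (P *m H^T *m invmx Rh *m V) *m
     dm (fun i => -(1/2) / (1 + l * alpha 0 i)) *m (V^T *m invmx Rh *m H).
Proof.
move=> uRh hRm VVt VtV apos l0 hd.
have hX := HPH_form uRh hd.
have sp i : 1 + l * alpha 0 i != 0.
  by apply: lt0r_neq0; apply: (lt_le_trans ltr01); rewrite lerDl mulr_ge0 // ltW.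
have hM : l *: (H *m P *m H^T) + Rm =
          Rh *m V *m dm (fun i => 1 + l * alpha 0 i) *m V^T *m Rh.
  rewrite -dmD1 -dmZ -dm_row hX -hRm.
  rewrite mulmxDr !mulmxDl mulmx1 -(mulmxA Rh V V^T) VVt mulmx1 addrC.
  by congr (_ + _); rewrite -scalemxAr -!scalemxAl.
have hinv : invmx (l *: (H *m P *m H^T) + Rm) =
    invmx Rh *m V *m dm (fun i => (1 + l * alpha 0 i)^-1) *m V^T *m invmx Rh.
  apply: inv_uniq; rewrite hM !mulmxA mulmxK //.
  rewrite -(mulmxA _ V^T V) VtV mulmx1 -(mulmxA _ (dm _) (dm _)) dmM.
  rewrite (@dm1 _ (fun i => (1 + l * alpha 0 i) * (1 + l * alpha 0 i)^-1)); last first.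
    by move=> i; rewrite mulfV.
  by rewrite mulmx1 -(mulmxA Rh V) VVt mulmx1 mulmxV.
rewrite /edhA hinv.
have -> : dm (fun i => -(1/2) / (1 + l * alpha 0 i)) = (-(1/2)) *: dm (fun i => (1 + l * alpha 0 i)^-1) by rewrite dmZ.
by rewrite -scalemxAr -!scalemxAl !mulmxA.
Qed.


Lemma FtE_form nx nz (P : 'M[R]_nx) (H : 'M[R]_(nz, nx)) (Rh V : 'M[R]_nz)
  (alpha : 'rV[R]_nz) :
  V^T *m V = 1%:M ->
  invmx Rh *m H *m P *m H^T *m invmx Rh = V *m diag_mx alpha *m V^T ->
  (V^T *m invmx Rh *m H) *m (P *m H^T *m invmx Rh *m V) = diag_mx alpha.
Proof.
move=> VtV hd.
have -> : (V^T *m invmx Rh *m H) *m (P *m H^T *m invmx Rh *m V) =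
   V^T *m (invmx Rh *m H *m P *m H^T *m invmx Rh) *m V by rewrite !mulmxA.
by rewrite hd !mulmxA VtV mul1mx -mulmxA VtV mulmx1.
Qed.

Lemma K_gen nx nz (E : 'M[R]_(nx, nz)) (Ft : 'M[R]_(nz, nx)) (M D : 'M[R]_nz) c :
  Ft *m E = D ->
  (1%:M + c *: (E *m M *m Ft)) *m E = E *m (1%:M + c *: (M *m D)).
Proof.
move=> hF; rewrite mulmxDl mul1mx mulmxDr mulmx1; congr (_ + _).
by rewrite -scalemxAl -scalemxAr -!mulmxA hF.
Qed.

Lemma B_gen nx nz (E : 'M[R]_(nx, nz)) (Ft : 'M[R]_(nz, nx)) (M D : 'M[R]_nz)
  (zt : 'cV[R]_nz) (xbar : 'cV[R]_nx) c1 c2 :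
  Ft *m E = D ->
  (1%:M + c2 *: (E *m M *m Ft)) *m ((1%:M + c1 *: (E *m M *m Ft)) *m (E *m zt)
     + (E *m M *m Ft) *m xbar)
  = E *m ((1%:M + c2 *: (M *m D)) *m ((1%:M + c1 *: (M *m D)) *m zt + M *m (Ft *m xbar))).
Proof.
move=> hF.
have -> : E *m M *m Ft *m xbar = E *m (M *m (Ft *m xbar)) by rewrite !mulmxA.
rewrite mulmxA (@K_gen _ _ E Ft M D _ hF) -(mulmxA E _ zt) -mulmxDr mulmxA (@K_gen _ _ E Ft M D _ hF) -mulmxA.
by [].
Qed.

Lemma edhb_form nx nz (P : 'M[R]_nx) (H : 'M[R]_(nz, nx)) (Rm Rh V : 'M[R]_nz)
  (alpha : 'rV[R]_nz) (xbar : 'cV[R]_nx) (z : 'cV[R]_nz) (l : R) :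
  Rh \in unitmx -> Rh *m Rh = Rm -> V *m V^T = 1%:M -> V^T *m V = 1%:M ->
  (forall i, 0 < alpha 0 i) -> 0 <= l ->
  invmx Rh *m H *m P *m H^T *m invmx Rh = V *m diag_mx alpha *m V^T ->
  edhb P H Rm xbar z l = (P *m H^T *m invmx Rh *m V) *m
    \col_i (((V^T *m invmx Rh *m z) i 0 * (1 + l * alpha 0 i / 2)
             - ((V^T *m invmx Rh *m H) *m xbar) i 0 / 2) / (1 + l * alpha 0 i) ^+ 2).
Proof.
move=> uRh hRm VVt VtV apos l0 hd.
have sp i : 1 + l * alpha 0 i != 0.
  by apply: lt0r_neq0; apply: (lt_le_trans ltr01); rewrite lerDl mulr_ge0 // ltW.
have hA := edhA_form uRh hRm VVt VtV apos l0 hd.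
have hF := FtE_form VtV hd.
have iRm : invmx Rm = invmx Rh *m invmx Rh.
  apply: inv_uniq; rewrite -hRm !mulmxA mulmxK // mulmxV //.
have hPz : P *m H^T *m invmx Rm *m z = (P *m H^T *m invmx Rh *m V) *m (V^T *m invmx Rh *m z).
  by rewrite iRm !mulmxA -(mulmxA _ V V^T) VVt mulmx1.
rewrite /edhb -/(edhA P H Rm l).
have -> : (1%:M + l *: edhA P H Rm l) *m P *m H^T *m invmx Rm *m z =
   (1%:M + l *: edhA P H Rm l) *m (P *m H^T *m invmx Rm *m z).
  by rewrite !mulmxA.
rewrite hPz hA (@B_gen _ _ _ _ _ _ _ _ _ _ hF); congr (_ *m _).
apply/colP => i; rewrite dm_row !dmM !dmZ !dmD1 dmv [(_ + _ : 'cV[R]_nz) i 0]mxE !dmv [RHS]mxE.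
by field.
Qed.


Lemma lin_derive nx m (x : R -> 'cV[R]_nx) (G : 'M[R]_(m, nx)) i (l : R)
  (d : 'cV[R]_nx) :
  (forall k, is_derive l 1 (fun t => x t k 0) (d k 0)) ->
  is_derive l 1 (fun t => (G *m x t) i 0) ((G *m d) i 0).
Proof.
move=> hd.
have -> : (fun t => (G *m x t) i 0) = \sum_(k < nx) (fun t => G i k * x t k 0).
  by apply/funext => t; rewrite fct_sumE mxE.
rewrite mxE; apply: is_derive_sum => k.
Qed.

Lemma lin_cont nx m (A : set R) (x : R -> 'cV[R]_nx) (G : 'M[R]_(m, nx)) i :
  (forall k, {within A, continuous (fun t => x t k 0)}) ->
  {within A, continuous (fun t => (G *m x t) i 0)}.
Proof.
move=> hc.
have -> : (fun t => (G *m x t) i 0) = \sum_(k < nx) (fun t => G i k * x t k 0).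
  by apply/funext => t; rewrite fct_sumE mxE.
move=> t; elim/big_ind: _.
- exact: cvg_cst.
- by move=> f g cf cg; apply: continuousD.
- move=> k _; apply: continuousM; first exact: cvg_cst.
  exact: hc.
Qed.

Lemma cst01 (f : R -> R) : {within `[0, 1], continuous f} ->
  (forall l : R, 0 < l < 1 -> is_derive l 1 f 0) -> f 1 = f 0.
Proof.
move=> fc fd.
have hfd : forall l : R, l \in `]0, 1[%R -> is_derive l 1 f 0.
  by move=> l hl; apply: fd; move: hl; rewrite in_itv.
have [c _] := MVT ltr01 hfd fc.
by move/eqP; rewrite mul0r subr_eq0 => /eqP.
Qed.

Lemma dgg (a l : R) : is_derive l 1 (fun l => 1 + l * a) a.
Proof. apply: is_derive_eq. by rewrite scaler0 !add0r mul1r; apply: mulr1. Qed.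

Lemma dKK (zt a xt l : R) : is_derive l 1 (fun l => zt * (l * a) + xt) (zt * a).
Proof. apply: is_derive_eq. by rewrite scaler0 add0r addr0 /GRing.scale /= mulr1. Qed.

Lemma der_cont (f : R -> R) (t df : R) : is_derive t 1 f df -> {for t, continuous f}.
Proof. move=> h; apply/differentiable_continuous/derivable1_diffP; exact: ex_derive. Qed.

Lemma scalar_ode (a zt xt : R) (w : R -> R) :
  0 < a -> {within `[0, 1], continuous w} ->
  (forall l : R, 0 < l < 1 -> is_derive l 1 w
     (a * (-(1/2) / (1 + l * a) * w l + (zt * (1 + l * a / 2) - xt / 2) / (1 + l * a) ^+ 2))) ->
  w 1 = (w 0 - xt) / Num.sqrt (1 + a) + (zt * a + xt) / (1 + a).
Proof.
move=> a0 wc wd.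
pose S := fun l : R => Num.sqrt (1 + l * a).
pose q := fun l : R => S l * w l - (zt * (l * a) + xt) * (S l)^-1.
have hq : forall l : R, 0 < l < 1 -> is_derive l 1 q 0.
  move=> l l01; have /andP[l0 l1] := l01.
  have hp : 0 < 1 + l * a.
    by apply: (lt_le_trans ltr01); rewrite lerDl mulr_ge0 // ltW.
  have dS : is_derive l 1 S ((2 * S l)^-1 * a).
    have h := @is_derive1_comp R Num.sqrt (fun l => 1 + l * a) l _ _ (is_derive1_sqrt hp) (dgg a l); exact h.
  have dw := wd l l01.
  have Sne : S l != 0 by rewrite /S sqrtr_eq0 -ltNge.
  have dSi : is_derive l 1 (fun l => (S l)^-1) (- (S l) ^- 2 *: ((2 * S l)^-1 * a)).
    exact: is_deriveV.
  have dK := dKK zt a xt l.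
  have -> : q = (S * w - (fun l => zt * (l * a) + xt) * (fun l => (S l)^-1))%R.
    by apply/funext => t.
  apply: is_derive_eq.
  rewrite /GRing.scale /=.
  move: Sne; rewrite /S; set s := Num.sqrt (1 + l * a) => Sne.
  have hla : l * a = s ^+ 2 - 1 by rewrite sqr_sqrtr ?ltW // addrC addKr.
  clearbody s; rewrite hla.
  have e : 1 + (s ^+ 2 - 1) = s ^+ 2 by rewrite addrC subrK.
  rewrite e; field; exact: Sne.
have cg : continuous (fun l : R => 1 + l * a).
  by move=> t; apply: der_cont (dgg a t).
have cS : continuous S.
  by move=> t; apply: continuous_comp; [exact: cg | exact: sqrt_continuous].
have cK : continuous (fun l : R => zt * (l * a) + xt).
  by move=> t; apply: der_cont (dKK zt a xt t).
have qc : {within `[0, 1], continuous q}.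
  rewrite continuous_subspace_in => t; rewrite inE /= in_itv /= => /andP[t0 t1].
  have St : S t != 0.
    rewrite /S sqrtr_eq0 -ltNge.
    by apply: (lt_le_trans ltr01); rewrite lerDl mulr_ge0 // ltW.
  have tA : `[0, 1] t by rewrite /= in_itv /= t0 t1.
  apply: (@continuousB R _ (subspace `[(0:R), 1]) (fun l => S l * w l) (fun l => (zt * (l * a) + xt) * (S l)^-1) t).
  - apply: (@continuousM R (subspace `[(0:R), 1]) S w t).
    + exact: (continuous_subspaceT_for tA (cS t)).
    + exact: wc.
  - apply: (@continuousM R (subspace `[(0:R), 1]) (fun l => zt * (l * a) + xt) (fun l => (S l)^-1) t).
    + exact: (continuous_subspaceT_for tA (cK t)).
    + apply: continuousV => //; exact: (continuous_subspaceT_for tA (cS t)).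
have e := cst01 qc hq.
move: e; rewrite /q /S ?mul0r ?mulr0 ?add0r ?addr0 ?mul1r ?sqrtr1 ?invr1 ?mul1r ?mulr1.
set s1 := Num.sqrt (1 + a) => e.
have s1p : 0 < s1 by rewrite sqrtr_gt0 -ltrBlDl sub0r (lt_trans _ a0) // ltrN10.
have hs1 : 1 + a = s1 ^+ 2 by rewrite sqr_sqrtr // ltW // -ltrBlDl sub0r (lt_trans _ a0) // ltrN10.
have s1n : s1 != 0 by rewrite gt_eqF.
have e2 : w 1 = (w 0 - xt + (zt * a + xt) / s1) / s1.
  by rewrite -e; field.
rewrite e2 hs1; field.
by rewrite s1n.
Qed.

End Alg.

Theorem mainTheorem3 (R : realType) (nx nz : nat)
  (P : 'M[R]_nx) (Rm : 'M[R]_nz) (H : 'M[R]_(nz, nx))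
  (xbar : 'cV[R]_nx) (z : 'cV[R]_nz)
  (Rh : 'M[R]_nz) (* the SPD square root of Rm *)
  (V : 'M[R]_nz) (alpha : 'rV[R]_nz)
  (x0 : 'cV[R]_nx) (x : R -> 'cV[R]_nx) :
  spd P -> spd Rm -> \rank H = nz ->
  spd Rh -> Rh *m Rh = Rm ->
  V^T *m V = 1%:M ->
  (forall i, 0 < alpha 0 i) ->
  invmx Rh *m H *m P *m H^T *m invmx Rh = V *m diag_mx alpha *m V^T ->
  (* x solves dx/dl = A(l) x + b(l) on [0,1], x(0) = x0 *)
  x 0 = x0 ->
  (forall k, {within `[(0:R), 1], continuous (fun t => x t k 0)}) ->
  (forall l : R, 0 < l < 1 -> forall k,
     is_derive l 1 (fun t => x t k 0)
       ((edhA P H Rm l *m x l + edhb P H Rm xbar z l) k 0)) ->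
  let E := P *m H^T *m invmx Rh *m V in
  let Ft := V^T *m invmx Rh *m H in
  let zt := V^T *m invmx Rh *m z in
  let xt := Ft *m xbar in
  let Omega := diag_mx (\row_i (((Num.sqrt (1 + alpha 0 i))^-1 - 1) / alpha 0 i)) in
  let Phi := 1%:M + E *m Omega *m Ft in
  let c : 'cV[R]_nz := \col_i
      ((alpha 0 i * zt i 0 + xt i 0 * (1 - Num.sqrt (1 + alpha 0 i))) /
       (alpha 0 i * (1 + alpha 0 i))) in
  let beta (mu : R) : 'cV[R]_nz := \col_i
      ((zt i 0 * (1 + mu * alpha 0 i / 2) - xt i 0 / 2) / (1 + mu * alpha 0 i) ^+ 2) in
  x 1 = Phi *m x0 + E *m c /\
  (forall mu : R, 0 <= mu <= 1 -> edhb P H Rm xbar z mu = E *m beta mu).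
Proof.
Proof.
move=> Pspd Rmspd rkH Rhspd hRm VtV apos hd hx0 xc xd E Ft zt xt Omega Phi c beta.
have uRh := spd_unit Rhspd.
have VVt := mulmx1C VtV.
have part2 : forall mu : R, 0 <= mu <= 1 -> edhb P H Rm xbar z mu = E *m beta mu.
  move=> mu /andP[m0 _].
  exact: (edhb_form xbar z uRh hRm VVt VtV apos m0 hd).
split; last exact: part2.
pose mf (l : R) := fun i => -(1/2) / (1 + l * alpha 0 i).
have hF : Ft *m E = dm (fun i => alpha 0 i) by rewrite -dm_row; exact: FtE_form.
have dform : forall l : R, 0 < l < 1 -> edhA P H Rm l *m x l + edhb P H Rm xbar z l =
    E *m (dm (mf l) *m (Ft *m x l) + beta l).
  move=> l /andP[l0 l1].
  rewrite (edhA_form (P:=P) (H:=H) uRh hRm VVt VtV apos (ltW l0) hd).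
  rewrite part2; last by rewrite (ltW l0) (ltW l1).
  by rewrite mulmxDr !mulmxA.
pose G := 1%:M - E *m dm (fun i => (alpha 0 i)^-1) *m Ft.
have GE : G *m E = 0.
  rewrite mulmxBl mul1mx -(mulmxA _ Ft E) hF -mulmxA dmM (@dm1 _ _ (fun i => (alpha 0 i)^-1 * alpha 0 i)).
    by rewrite mulmx1 subrr.
  by move=> i; rewrite mulVf // gt_eqF.
have hG : G *m x 1 = G *m x 0.
  apply/colP => k.
  apply: (cst01 (f := fun t => (G *m x t) k 0)); first exact: lin_cont.
  move=> l l01; apply: (is_derive_eq (lin_derive G k (xd l l01))).
  by rewrite dform // mulmxA GE mul0mx mxE.
have hw : forall i, (Ft *m x 1) i 0 =
    ((Ft *m x 0) i 0 - xt i 0) / Num.sqrt (1 + alpha 0 i) +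
    (zt i 0 * alpha 0 i + xt i 0) / (1 + alpha 0 i).
  move=> i; apply: (scalar_ode (zt := zt i 0) (xt := xt i 0) (w := fun t => (Ft *m x t) i 0) (apos i)); first exact: lin_cont.
  move=> l l01; apply: (is_derive_eq (lin_derive Ft i (xd l l01))).
  rewrite dform // mulmxA hF dmv mxE dmv /mf mxE.
  by rewrite /beta mxE.
have hx1 : x 1 = x 0 + E *m (dm (fun i => (alpha 0 i)^-1) *m (Ft *m x 1 - Ft *m x 0)).
  have e1 : x 1 = G *m x 1 + E *m dm (fun i => (alpha 0 i)^-1) *m Ft *m x 1.
    by rewrite /G mulmxBl mul1mx subrK.
  rewrite {1}e1 hG /G mulmxBl mul1mx.
  rewrite mulmxBr mulmxBr !mulmxA.
  by rewrite -!addrA; congr (_ + _); rewrite addrC.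
rewrite hx1 hx0 /Phi mulmxDl mul1mx -addrA; congr (_ + _).
rewrite -(mulmxA (E *m Omega) Ft x0) -(mulmxA E Omega) -mulmxDr; congr (_ *m _).
apply/colP => i.
move: (hw i); rewrite hx0 /Omega /c dm_row -/xt.
move: (Ft *m x 1) (Ft *m x0) (zt) (xt) => w1 w0 zt1 xt1 hwi.
rewrite [(_ + _ : 'cV[R]_nz) i 0]mxE !dmv !mxE hwi.
have a0 := apos i.
set s1 := Num.sqrt (1 + alpha 0 i).
have s1p : 0 < s1 by rewrite sqrtr_gt0 -ltrBlDl sub0r (lt_trans _ a0) // ltrN10.
have hs1 : 1 + alpha 0 i = s1 ^+ 2 by rewrite sqr_sqrtr // ltW // -ltrBlDl sub0r (lt_trans _ a0) // ltrN10.
have s1n : s1 != 0 by rewrite gt_eqF.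
rewrite hs1; field.
by rewrite s1n gt_eqF.
Qed.
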